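(* Suppose that $\mathbf{unif}<\mathbf{b}$. Then there exists a nonprincipal filter on $\omega$ which is meager but not Lebesgue measurable (as a subset of $2^\omega$).
   Context: $\mathbf{b}$ is the smallest size of a family of functions in $\omega^\omega$ that is unbounded with respect to eventual domination; $\mathbf{unif}$ is the smallest size of a non-measurable (equivalently, not measure zero) subset of $2^\omega$. A filter on $\omega$ is identified with the set of characteristic functions of its elements, a subset of $2^\omega$, which carries the product topology and the standard product (Lebesgue) measure. *)

(* Defs.v *)
From HB Require Import structures.
From mathcomp Require Import all_boot all_order all_algebra.
From mathcomp Require Import all_classical all_reals all_analysis.
From mathcomp Require Import Rstruct Rstruct_topology.
Set Implicit Arguments. Unset Strict Implicit. Unset Printing Implicit Defensive.
Import Order.TTheory GRing.Theory Num.Theory.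
Local Open Scope classical_set_scope.
Local Open Scope ring_scope.

(** 2^omega with the product topology: the library's [cantor_space]
    (= prod_topology (fun _ : nat => bool)). *)

Definition nowhere_dense (T : topologicalType) (A : set T) : Prop :=
  interior (closure A) = set0.

Definition meager (T : topologicalType) (A : set T) : Prop :=
  exists N : nat -> set T,
    (forall n, nowhere_dense (N n)) /\ A `<=` \bigcup_n N n.

Definition cyl (s : seq bool) : set cantor_space :=
  [set x | forall i, (i < size s)%N -> x i = nth false s i].

Definition cyl_weight (s : seq bool) : Rdefinitions.R := (2 ^- size s)%R.

Definition lebesgue_outer (A : set cantor_space) : \bar Rdefinitions.R :=
  ereal_inf [set v | exists c : nat -> seq bool,
     A `<=` \bigcup_n cyl (c n) /\
     v = (\sum_(0 <= n <oo) (cyl_weight (c n))%:E)%E].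

Definition null_set (A : set cantor_space) : Prop := lebesgue_outer A = 0%E.

Definition lebesgue_measurable (A : set cantor_space) : Prop :=
  lebesgue_outer.-caratheodory A.

(** ** Cardinal characteristics, as minimal-cardinality witnesses *)
Definition eventually_le (f g : nat -> nat) : Prop :=
  exists N, forall n, (N <= n)%N -> (f n <= g n)%N.

Definition unbounded_family (F : set (nat -> nat)) : Prop :=
  ~ exists g, forall f, F f -> eventually_le f g.

Definition is_b_witness (F : set (nat -> nat)) : Prop :=
  unbounded_family F /\
  forall G : set (nat -> nat), unbounded_family G -> (F #<= G)%card.

Definition is_unif_witness (X : set cantor_space) : Prop :=
  ~ null_set X /\
  forall Y : set cantor_space, ~ null_set Y -> (X #<= Y)%card.

Definition unif_lt_b : Prop :=
  exists (X : set cantor_space) (F : set (nat -> nat)),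
    is_unif_witness X /\ is_b_witness F /\
    (X #<= F)%card /\ ~ (F #<= X)%card.

Definition is_filter (F : set (set nat)) : Prop :=
  [/\ F setT, ~ F set0,
      (forall A B, F A -> A `<=` B -> F B) &
      (forall A B, F A -> F B -> F (A `&` B))].

Definition nonprincipal (F : set (set nat)) : Prop :=
  forall A : set nat, finite_set (~` A) -> F A.

Definition filter_as_subset (F : set (set nat)) : set cantor_space :=
  [set x | F [set n | x n = true]].

(* Main.v *)
Require Import Defs.
From HB Require Import structures.
From mathcomp Require Import all_boot all_order all_algebra.
From mathcomp Require Import all_classical all_reals all_analysis.
From mathcomp Require Import Rstruct Rstruct_topology.
From mathcomp Require Import ring lra.
Set Implicit Arguments. Unset Strict Implicit. Unset Printing Implicit Defensive.
Import Order.TTheory GRing.Theory Num.Theory.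
Local Open Scope classical_set_scope.
Local Open Scope ring_scope.
Notation R := Rdefinitions.R.
Definition psum (c : nat -> seq bool) (N : nat) : R := \sum_(0 <= n < N) cyl_weight (c n).
Definition ser (c : nat -> seq bool) : \bar R := (\sum_(0 <= n <oo) (cyl_weight (c n))%:E)%E.
Definition covers (c : nat -> seq bool) (A : set cantor_space) := A `<=` \bigcup_n cyl (c n).

Lemma w_gt0 s : 0 < cyl_weight s.
Proof. by rewrite /cyl_weight invr_gt0 exprn_gt0. Qed.
Lemma w_ge0 s : 0 <= cyl_weight s.
Proof. exact/ltW/w_gt0. Qed.

Lemma psum_ser c N : ((psum c N)%:E <= ser c)%E.
Proof.
rewrite /psum -sumEFin /ser.
apply: nneseries_lim_ge => n _ _; rewrite lee_fin; exact: w_ge0.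
Qed.

Lemma ser_le c (b : R) : (forall N, psum c N <= b) -> (ser c <= b%:E)%E.
Proof.
move=> H; rewrite /ser; apply: lime_le.
  by apply: is_cvg_nneseries => n _ _; rewrite lee_fin; exact: w_ge0.
by apply: nearW => N; rewrite sumEFin lee_fin; exact: H.
Qed.

Lemma ser_ge0 c : (0 <= ser c)%E.
Proof. by apply: nneseries_ge0 => n _ _; rewrite lee_fin; exact: w_ge0. Qed.

Lemma null_from A :
  (forall e : R, 0 < e -> exists c, covers c A /\ forall N, psum c N <= e) ->
  Defs.null_set A.
Proof.
move=> H; rewrite /Defs.null_set /lebesgue_outer; apply/eqP; rewrite eq_le; apply/andP; split.
  apply/lee_addgt0Pr => e e0; rewrite add0e.
  have [c [cA cb]] := H e e0.
  apply: (@le_trans _ _ (ser c)); last exact: ser_le.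
  by apply: ereal_inf_lbound; exists c.
by apply/ereal_infP => _ [c [_ ->]]; exact: ser_ge0.
Qed.

Lemma null_to A : Defs.null_set A ->
  forall e : R, 0 < e -> exists c, covers c A /\ forall N, psum c N <= e.
Proof.
rewrite /Defs.null_set /lebesgue_outer => H e e0.
have : (ereal_inf [set v | exists c : nat -> seq bool,
     A `<=` \bigcup_n cyl (c n) /\
     v = (\sum_(0 <= n <oo) (cyl_weight (c n))%:E)%E] < e%:E)%E by rewrite H lte_fin.
move=> /ereal_inf_lt [_ [c [cA ->]]] ce; exists c; split => // N.
have := le_lt_trans (psum_ser c N) ce; rewrite lte_fin; exact: ltW.
Qed.

Lemma null_sub A B : A `<=` B -> Defs.null_set B -> Defs.null_set A.
Proof.
move=> AB nB; apply: null_from => e e0; have [c [cB cb]] := null_to nB e0.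
by exists c; split => // x /AB /cB.
Qed.

Lemma outer_ge1 Y :
  (forall c (W : R), covers c Y -> W < 1 -> (forall N, psum c N <= W) -> Defs.null_set Y) ->
  ~ Defs.null_set Y -> (1 <= lebesgue_outer Y)%E.
Proof.
move=> H nY; apply/ereal_infP => _ [c [cY ->]].
rewrite leNgt; apply/negP => lt1; apply: nY.
have sfin : ser c \is a fin_num.
  by rewrite ge0_fin_numE ?ser_ge0 //; apply: lt_trans lt1 _; exact: ltry.
have E := fineK sfin.
apply: (H c (fine (ser c))) => //; first by rewrite -lte_fin E.
by move=> N; rewrite -lee_fin E; exact: psum_ser.
Qed.

Lemma geo_eq K M : \sum_(0 <= m < M) ((2:R) ^- (m + K)) + 2 * 2 ^- (M + K) = 2 * 2 ^- K.
Proof.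
elim: M => [|M IH]; first by rewrite big_geq // add0r.
rewrite big_nat_recr //= -addrA -IH; congr (_ + _).
rewrite addSn exprS invfM; field; exact/lt0r_neq0/exprn_gt0.
Qed.

Lemma geo_le K M : \sum_(0 <= m < M) ((2:R) ^- (m + K)) <= 2 * 2 ^- K.
Proof.
by rewrite -(geo_eq K M) lerDl; apply: mulr_ge0 => //.
Qed.

Lemma outer_top : (lebesgue_outer setT <= (3 / 2 : R)%:E)%E.
Proof.
pose c n := if n is m.+1 then nseq m.+2 false else [::].
apply: (@le_trans _ _ (ser c)).
  by apply: ereal_inf_lbound; exists c; split => // x _; exists 0%N => //= i.
apply: ser_le => -[|N]; first by rewrite /psum big_geq //; lra.
rewrite /psum big_nat_recl //= /cyl_weight /= expr0 invr1.
have -> : \sum_(0 <= i < N) (2:R) ^- size (c i.+1) = \sum_(0 <= i < N) (2:R) ^- (i + 2).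
  by apply: eq_bigr => i _; rewrite /c size_nseq addn2.
have := geo_le 2 N; rewrite expr2 => h.
have -> : (3 / 2 : R) = 1 + 2 * (2 * 2)^-1 by field.
by rewrite lerD2l.
Qed.

Lemma psum_split c N M : (N <= M)%N ->
  psum c M = psum c N + \sum_(N <= n < M) cyl_weight (c n).
Proof. by move=> NM; rewrite /psum (@big_cat_nat _ _ _ N 0 M) //. Qed.

Lemma psum_mono c N M : (N <= M)%N -> psum c N <= psum c M.
Proof.
move=> NM; rewrite (psum_split c NM) lerDl; apply: sumr_ge0 => i _; exact: w_ge0.
Qed.

Lemma comb (I : eqType) (ts : seq I) (d : I -> nat -> seq bool) (b : R) :
  (0 < size ts)%N -> (forall t, t \in ts -> forall M, psum (d t) M <= b) ->
  exists e, (forall t m, t \in ts -> exists n, e n = d t m) /\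
            forall N, psum e N <= (size ts)%:R * b.
Proof.
case: ts => [//|t0 ts'] _; set ts := t0 :: ts'; set T := size ts => Hb.
have T0 : (0 < T)%N by [].
pose e n := d (nth t0 ts (n %% T)%N) (n %/ T)%N.
have eE m j : (j < T)%N -> e (m * T + j)%N = d (nth t0 ts j) m.
  by move=> jT; rewrite /e modnMDl modn_small // divnMDl // divn_small // addn0.
exists e; split.
  move=> t m tin; exists (m * T + index t ts)%N.
  by rewrite eE ?index_mem // nth_index.
move=> N.
have blk : forall N, psum e (N * T) = \sum_(0 <= j < T) psum (d (nth t0 ts j)) N.
  elim=> [|K IH]; first by rewrite mul0n /psum big_geq // big1 // => j _; rewrite big_geq.
  rewrite mulSn addnC (psum_split _ (leq_addr T (K * T))) IH.
  have -> : \sum_(K * T <= n < K * T + T) cyl_weight (e n) =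
            \sum_(0 <= j < T) cyl_weight (e (K * T + j)%N).
    rewrite -{1}[(K * T)%N]add0n big_addn addKn.
    by apply: eq_bigr => j _; rewrite addnC.
  rewrite -big_split /=; apply: eq_big_nat => j /andP[_ jT].
  by rewrite /psum big_nat_recr //= eE.
apply: (le_trans (psum_mono e (_ : N <= N * T)%N)); first by rewrite leq_pmulr.
rewrite blk; apply: (@le_trans _ _ (\sum_(0 <= j < T) b)).
  apply: ler_sum_nat => j /andP[_ jT]; apply: Hb; exact: mem_nth.
by rewrite sumr_const_nat subn0 mulr_natl.
Qed.

Lemma null_union (A B C : set cantor_space) :
  C `<=` A `|` B -> Defs.null_set A -> Defs.null_set B -> Defs.null_set C.
Proof.
move=> CAB nA nB; apply: null_from => e e0.
have e20 : 0 < e / 2 by rewrite divr_gt0.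
have [cA [cAc cAb]] := null_to nA e20; have [cB [cBc cBb]] := null_to nB e20.
have [f [fc fb]] := @comb _ [:: true; false] (fun b => if b then cA else cB) (e / 2) isT
  (fun t _ => if t as t return forall M, psum (if t then cA else cB) M <= e / 2
              then cAb else cBb).
exists f; split; last by move=> N; apply: le_trans (fb N) _; rewrite /=; lra.
move=> x /CAB [/cAc [m _ xm]|/cBc [m _ xm]].
  by have [n fn] := fc true m isT; exists n => //; rewrite fn.
by have [n fn] := fc false m isT; exists n => //; rewrite fn.
Qed.

Definition flip (x : cantor_space) : cantor_space := fun n => ~~ x n.
Lemma flipK x : flip (flip x) = x.
Proof. by apply: funext => n; rewrite /flip negbK. Qed.

Lemma null_flip (A : set cantor_space) :
  Defs.null_set A -> Defs.null_set [set x | A (flip x)].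
Proof.
move=> nA; apply: null_from => e e0; have [c [cc cb]] := null_to nA e0.
exists (fun n => map negb (c n)); split.
  move=> x /cc [n _ xn]; exists n => // i; rewrite size_map => ilt.
  have := xn i ilt; rewrite /flip => h.
  by rewrite (nth_map false) // -h negbK.
by move=> N; apply: le_trans (cb N); rewrite le_eqVlt; apply/orP; left; apply/eqP;
  apply: eq_bigr => n _; rewrite /cyl_weight size_map.
Qed.

Lemma cyl_pre p (x : cantor_space) : cyl p x <-> mkseq x (size p) = p.
Proof.
split.
  move=> h; apply: (@eq_from_nth _ false); rewrite size_mkseq // => i ip.
  by rewrite nth_mkseq // h.
by move=> <- i; rewrite size_mkseq => ip; rewrite nth_mkseq.
Qed.

Lemma cyl_prefix p q (x : cantor_space) :
  cyl p x -> cyl q x -> (size p <= size q)%N -> prefix p q.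
Proof.
move=> /cyl_pre hp /cyl_pre hq pq; rewrite prefixE; apply/eqP.
apply: (@eq_from_nth _ false); rewrite size_takel // => i ilt.
rewrite nth_take // -hp -hq !nth_mkseq //; exact: leq_trans ilt pq.
Qed.

Lemma cyl_comp p q (x : cantor_space) :
  cyl p x -> cyl q x -> prefix p q \/ prefix q p.
Proof.
move=> hp hq; case: (leqP (size p) (size q)) => h.
  by left; exact: cyl_prefix hp hq h.
by right; apply: cyl_prefix hq hp (ltnW h).
Qed.

Fixpoint allseqs (L : nat) : seq (seq bool) :=
  if L is L'.+1 then map (cons false) (allseqs L') ++ map (cons true) (allseqs L')
  else [:: [::]].

Lemma size_allseqs L : size (allseqs L) = (2 ^ L)%N.
Proof. by elim: L => //= L IH; rewrite size_cat !size_map IH expnS mul2n addnn. Qed.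

Lemma allseqs_size L t : t \in allseqs L -> size t = L.
Proof.
elim: L t => [|L IH] t /=; first by rewrite inE => /eqP->.
by rewrite mem_cat => /orP[] /mapP[s /IH <- ->].
Qed.

Lemma mem_allseqs L t : size t = L -> t \in allseqs L.
Proof.
elim: L t => [|L IH] [|b t] //= [st]; rewrite mem_cat.
by case: b; apply/orP; [right|left]; apply/mapP; exists t => //; apply: IH.
Qed.

Fixpoint r (p t : seq bool) {struct t} : R :=
  match t, p with
  | [::], _ => cyl_weight p
  | b :: t', [::] => 2 ^- size t
  | b :: t', a :: p' => if a == b then r p' t' / 2 else 0
  end.

Lemma r_ge0 p t : 0 <= r p t.
Proof.
elim: t p => [|b t IH] [|a p] /=; rewrite ?w_ge0 ?invr_ge0 ?exprn_ge0 //.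
by case: eqP => _ //; rewrite divr_ge0.
Qed.

Lemma w_cons b p : cyl_weight (b :: p) = cyl_weight p / 2.
Proof. by rewrite /cyl_weight /= exprS invfM mulrC. Qed.

Lemma r_sum L p : \sum_(t <- allseqs L) r p t = cyl_weight p.
Proof.
elim: L p => [|L IH] p /=; first by rewrite big_seq1.
rewrite big_cat !big_map /=; case: p => [|a p].
  have E : \sum_(j <- allseqs L) (2:R) ^- (size j).+1 = 2 ^- L.+1 *+ (2 ^ L)%N.
    rewrite big_seq (eq_bigr (fun=> 2 ^- L.+1)); last first.
      by move=> t /allseqs_size ->.
    by rewrite -big_seq big_const_seq iter_addr addr0 count_predT size_allseqs.
  rewrite E /cyl_weight /= expr0 invr1 -mulrnDr addnn -[((2 ^ L).*2)%N]mul2n -expnS -(mulr_natr _ (2 ^ L.+1)%N) natrX mulVf // expf_neq0.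
by case: a => /=; rewrite big1_eq ?add0r ?addr0 -mulr_suml IH w_cons.
Qed.

Lemma r_ext t q : r (t ++ q) t = cyl_weight (t ++ q).
Proof. by elim: t => [|b t IH] //=; rewrite eqxx IH w_cons. Qed.

Lemma r_pre p q : r p (p ++ q) = 2 ^- size (p ++ q).
Proof.
elim: p => [|b p IH] /=; first by case: q.
by rewrite eqxx IH exprS invfM mulrC.
Qed.

Lemma tail_small c (W d : R) : (forall N, psum c N <= W) -> 0 < d ->
  exists N, forall M, \sum_(N <= n < M) cyl_weight (c n) <= d.
Proof.
move=> HW d0; pose E := [set psum c N | N in [set: nat]].
have hs : has_sup E by split; [exists (psum c 0), 0%N | exists W => _ [N _ <-]].
have [_ [N _ <-] hN] := sup_adherent d0 hs.
exists N => M; case: (leqP M N) => MN.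
  by rewrite big_geq // ltW.
have := sup_upper_bound hs (ex_intro2 _ _ M I erefl) ; rewrite /= (psum_split c (ltnW MN)).
move=> h; lra.
Qed.

Lemma exists_pow (e : R) : 0 < e -> exists k, (2:R) ^- k <= e.
Proof.
move=> e0; have ie : 0 <= e^-1 by rewrite invr_ge0 ltW.
have := archi_boundP ie.
set n := Num.Def.archi_bound _ => hn; exists n.
have h2 : (n%:R : R) <= 2 ^+ n.
  by rewrite -natrX ler_nat; apply: ltnW; rewrite ltn_expl.
rewrite -[e]invrK lef_pV2 ?posrE ?exprn_gt0 ?invr_gt0 //.
exact: ltW (lt_le_trans hn h2).
Qed.

Lemma sum_ge_term (I : eqType) (s : seq I) (F : I -> R) i :
  (forall j, 0 <= F j) -> i \in s -> F i <= \sum_(j <- s) F j.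
Proof.
move=> F0; elim: s => [//|a s IH]; rewrite inE big_cons => /orP[/eqP->|/IH h].
  by rewrite lerDl sumr_ge0.
by apply: le_trans h _; rewrite lerDr.
Qed.

Lemma shift_sum (F : nat -> R) N M :
  \sum_(0 <= m < M) F (N + m)%N = \sum_(N <= n < N + M) F n.
Proof.
elim: M => [|M IH]; first by rewrite addn0 !big_geq.
by rewrite addnS !big_nat_recr //= ?IH // leq_addr.
Qed.

Lemma sum_filter_le (I : Type) (s : seq I) (P : pred I) (F : I -> R) :
  (forall j, 0 <= F j) -> \sum_(j <- s | P j) F j <= \sum_(j <- s) F j.
Proof.
move=> F0; rewrite [X in _ <= X](bigID P) /= lerDl; exact: sumr_ge0.
Qed.

Definition eqfin (x y : cantor_space) := exists m, forall i, (m <= i)%N -> x i = y i.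
Definition invariant (Y : set cantor_space) := forall x y, eqfin x y -> Y x -> Y y.

Lemma zero_one Y c (W : R) : invariant Y -> covers c Y -> W < 1 ->
  (forall N, psum c N <= W) -> Defs.null_set Y.
Proof.
move=> inv cY W1 HW; apply: null_from => e e0.
pose d := e * (1 - W) / 4.
have d0 : 0 < d by rewrite /d; apply: divr_gt0 => //; apply: mulr_gt0 => //; lra.
have [N HN] := tail_small HW d0.
pose L := \max_(n < N) size (c n).
have sizeL : forall n, (n < N)%N -> (size (c n) <= L)%N.
  by move=> n nN; exact: (@leq_bigmax _ (fun i : 'I_N => size (c i)) (Ordinal nN)).
pose good t := all (fun n => ~~ prefix (c n) t) (iota 0 N).
pose G := [seq t <- allseqs L | good t].
pose g := size G.
pose P : R := 2 ^+ L.
have P0 : 0 < P by rewrite exprn_gt0.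
have A : (1 - W) * P <= g%:R.
  have S1 : \sum_(t <- allseqs L) \sum_(0 <= n < N) r (c n) t = psum c N.
    by rewrite exchange_big /=; apply: eq_bigr => n _; exact: r_sum.
  have S2 : \sum_(t <- allseqs L | ~~ good t) P^-1 <=
            \sum_(t <- allseqs L) \sum_(0 <= n < N) r (c n) t.
    apply: (@le_trans _ _ (\sum_(t <- allseqs L | ~~ good t) \sum_(0 <= n < N) r (c n) t)); last first.
      by apply: sum_filter_le => j; apply: sumr_ge0 => i _; exact: r_ge0.
    rewrite big_seq_cond [X in _ <= X]big_seq_cond; apply: ler_sum => t /andP[tin ng].
    move/allPn: ng => [n nin /negPn pre].
    have tL := allseqs_size tin.
    apply: (@le_trans _ _ (r (c n) t)); last first.
      apply: (@sum_ge_term _ _ (fun j => r (c j) t)); first by move=> j; exact: r_ge0.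
      by rewrite /index_iota subn0.
    by move/prefixP: pre => [q tq]; rewrite tq r_pre -tq tL.
  have S3 : \sum_(t <- allseqs L | ~~ good t) P^-1 = P^-1 *+ count (predC good) (allseqs L).
    by rewrite big_const_seq iter_addr addr0.
  have C1 := count_predC good (allseqs L).
  rewrite size_allseqs -size_filter -/G -/g in C1.
  have C2 : (g%:R : R) + (count (predC good) (allseqs L))%:R = P.
    by rewrite -natrD C1 natrX.
  move: S2; rewrite S1 S3 => S2.
  have S4 := le_trans S2 (HW N).
  have S5 : (count (predC good) (allseqs L))%:R <= W * P.
    by rewrite -(ler_pdivrMr _ _ P0) mulrC mulr_natr.
  lra.
have g0 : 0 < (g%:R : R).
  apply: lt_le_trans A; apply: mulr_gt0 => //; lra.
have [t0 [t0G Ht0]] : exists t0, t0 \in G /\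
    forall M, \sum_(N <= n < M) r (c n) t0 <= 2 * d / g%:R.
  apply: contrapT => H.
  have H' : forall t, exists M, t \in G -> 2 * d / g%:R < \sum_(N <= n < M) r (c n) t.
    move=> t; case: (pselect (t \in G)) => tG; last by exists 0%N.
    apply: contrapT => nM; apply: H; exists t; split => // M.
    rewrite leNgt; apply/negP => lt; apply: nM; exists M => _; exact: lt.
  have [Mf HMf] := choice H'.
  pose Mx := \max_(t <- G) Mf t.
  have lo : 2 * d <= \sum_(t <- G) \sum_(N <= n < Mx) r (c n) t.
    have -> : 2 * d = \sum_(t <- G) (2 * d / g%:R).
      rewrite big_const_seq iter_addr addr0 count_predT -/g -[_ *+ g]mulr_natr.
      by field; exact: lt0r_neq0.
    rewrite big_seq [X in _ <= X]big_seq; apply: ler_sum => t tG.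
    have h := HMf t tG.
    have hpos : 0 < 2 * d / g%:R by rewrite divr_gt0 // mulr_gt0.
    case: (leqP (Mf t) N) => MN.
      by move: h; rewrite big_geq // => h; exfalso; move: (lt_trans hpos h); rewrite ltxx.
    have MM : (Mf t <= Mx)%N by apply: (@leq_bigmax_seq _ _ xpredT).
    rewrite (@big_cat_nat _ _ _ (Mf t)) //=; last exact: ltnW.
    apply: ltW; apply: lt_le_trans h _; rewrite lerDl; apply: sumr_ge0 => i _; exact: r_ge0.
  have hi : \sum_(t <- G) \sum_(N <= n < Mx) r (c n) t <= d.
    rewrite big_filter; apply: le_trans (sum_filter_le _ _ _) _.
      by move=> j; apply: sumr_ge0 => i _; exact: r_ge0.
    rewrite exchange_big /=; apply: le_trans (HN Mx); rewrite le_eqVlt; apply/orP; left.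
    by apply/eqP; apply: eq_bigr => n _; exact: r_sum.
  lra.
have t0L : size t0 = L by move: t0G; rewrite mem_filter => /andP[_ /allseqs_size].
have t0good : good t0 by move: t0G; rewrite mem_filter => /andP[].
have e4 : 0 < e / (4 * P) by rewrite divr_gt0 // mulr_gt0.
have [k hk] := exists_pow e4.
pose tau (t p : seq bool) (m : nat) :=
  if prefix t0 p then t ++ drop L p else if prefix p t0 then t else nseq (m + k) false.
pose dd t m := tau t (c (N + m)%N) m.
have wt : forall t, size t = L -> forall m,
    cyl_weight (dd t m) <= r (c (N + m)%N) t0 + 2 ^- (m + k).
  move=> t tL m; rewrite /dd /tau; case: ifP => [/prefixP [q ->]|_].
    rewrite r_ext drop_size_cat // /cyl_weight !size_cat tL t0L lerDl.
    by rewrite invr_ge0 exprn_ge0.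
  case: ifP => [/prefixP [q eq0]|_].
    rewrite eq0 r_pre -eq0 t0L /cyl_weight tL lerDl; by rewrite invr_ge0 exprn_ge0.
  by rewrite /cyl_weight size_nseq lerDr r_ge0.
have pb : forall t, t \in allseqs L -> forall M,
    psum (dd t) M <= 2 * d / g%:R + 2 * 2 ^- k.
  move=> t /allseqs_size tL M; rewrite /psum.
  apply: le_trans (ler_sum _ (fun m _ => wt t tL m)) _.
  rewrite big_split /=; apply: lerD; last exact: geo_le.
  by rewrite (shift_sum (fun n => r (c n) t0)); exact: Ht0.
have sz0 : (0 < size (allseqs L))%N by rewrite size_allseqs expn_gt0.
have [e' [e'c e'b]] := comb sz0 pb.
exists e'; split; last first.
  move=> M; apply: le_trans (e'b M) _; rewrite size_allseqs natrX -/P.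
  have hk' : 4 * P * 2 ^- k <= e by rewrite -ler_pdivlMl ?mulr_gt0 // mulrC.
  rewrite mulrDr.
  have h1 : P * (2 * d / g%:R) <= e / 2.
    rewrite mulrA ler_pdivrMr //; rewrite /d; nra.
  lra.
move=> x Yx.
pose t := mkseq x L.
pose x' : cantor_space := fun i => if (i < L)%N then nth false t0 i else x i.
have Yx' : Y x' by apply: inv Yx; exists L => i iL; rewrite /x' ltnNge iL.
have ct0 : cyl t0 x' by move=> i; rewrite t0L /x' => ->.
have [n _ hn] := cY x' Yx'.
case: (ltnP n N) => nN.
  have pre : prefix (c n) t0 by apply: cyl_prefix hn ct0 _; rewrite t0L; exact: sizeL.
  by move/allP: t0good => /(_ n); rewrite mem_iota add0n nN => /(_ isT); rewrite pre.
have [n' e'n'] := e'c t (n - N)%N (mem_allseqs (size_mkseq _ _)).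
exists n' => //; rewrite e'n' /dd /tau subnKC //.
case: ifP => [pt0|npt0].
  move/prefixP: (pt0) => [q cq].
  move=> i; rewrite size_cat size_mkseq => iL.
  rewrite nth_cat size_mkseq; case: ifP => iL'; first by rewrite nth_mkseq.
  rewrite nth_drop subnKC; last by rewrite leqNgt iL'.
  have := hn i; rewrite /x' iL' => -> //.
  by rewrite cq size_cat t0L; move: iL; rewrite cq drop_size_cat.
case: ifP => [_|npt0'].
  by apply/cyl_pre; rewrite size_mkseq.
by case: (cyl_comp hn ct0); rewrite ?npt0 ?npt0'.
Qed.

Lemma nbhs_coord (q : cantor_space) n : nbhs q [set y : cantor_space | y n = q n].
Proof.
have := @proj_continuous nat (fun _ => bool) n q [set q n] (discrete_set1 _).
by [].
Qed.

Lemma nbhs_prefix (q : cantor_space) n :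
  nbhs q [set y : cantor_space | forall i, (i < n)%N -> y i = q i].
Proof.
elim: n => [|n IH].
  by apply: filterS filterT => y _ i; rewrite ltn0.
apply: filterS (filterI IH (nbhs_coord q n)) => y [h1 h2] i.
by rewrite ltnS leq_eqVlt => /orP[/eqP->//|]; exact: h1.
Qed.

Lemma seq_cvg (p : cantor_space) (q : nat -> cantor_space) :
  (forall i, \forall m \near \oo, q m i = p i) -> q @ \oo --> p.
Proof.
move=> H; apply/(@pointwise_cvgP nat bool) => t.
by apply/discrete_cvg; exact: H.
Qed.

Lemma nd_crit (A : set cantor_space) :
  (forall (p : cantor_space) m, exists q : cantor_space, exists n,
     (forall i, (i < m)%N -> q i = p i) /\
     forall y : cantor_space, (forall i, (i < n)%N -> y i = q i) -> ~ A y) ->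
  nowhere_dense A.
Proof.
move=> H; rewrite /nowhere_dense; apply/seteqP; split => // p /= Hp.
have /choice [qf Hq] : forall m, exists qn : cantor_space * nat,
    (forall i, (i < m)%N -> qn.1 i = p i) /\
    forall y : cantor_space, (forall i, (i < qn.2)%N -> y i = qn.1 i) -> ~ A y.
  by move=> m; have [q [n hqn]] := H p m; exists (q, n).
have cv : (fun m => (qf m).1) @ \oo --> p.
  by apply: seq_cvg => i; exists i.+1 => // m /= im; apply: (Hq m).1.
have ev : \forall m \near \oo, closure A (qf m).1 := cv _ Hp.
case: ev => m _ /(_ m (leqnn m)) cm.
have [y [Ay Py]] := cm _ (nbhs_prefix (qf m).1 (qf m).2).
exact: (Hq m).2 y Py Ay.
Qed.

Lemma evle_trans f g h : eventually_le f g -> eventually_le g h -> eventually_le f h.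
Proof.
move=> [N1 h1] [N2 h2]; exists (maxn N1 N2) => n hn.
rewrite geq_max in hn; case/andP: hn => a b.
exact: leq_trans (h1 n a) (h2 n b).
Qed.

Fixpoint allZ (Z : set cantor_space) (s : seq cantor_space) : Prop :=
  if s is z :: s' then Z z /\ allZ Z s' else True.

Lemma bndn (Z : set cantor_space)
  (B : forall h : cantor_space -> nat -> nat, exists g, forall z, Z z -> eventually_le (h z) g) :
  forall n (Phi : seq cantor_space -> nat -> nat), exists g,
    forall s, size s = n -> allZ Z s -> eventually_le (Phi s) g.
Proof.
elim=> [|n IH] Phi.
  exists (Phi [::]) => -[|//] _ _; by exists 0%N.
have /choice [gz Hgz] : forall z : cantor_space, exists g, forall s, size s = n -> allZ Z s ->
    eventually_le (Phi (z :: s)) g by move=> z; exact: IH.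
have [g Hg] := B gz.
exists g => -[//|z s] [sz] [Zz Zs].
exact: evle_trans (Hgz z s sz Zs) (Hg z Zz).
Qed.

Lemma bnd_all (Z : set cantor_space)
  (B : forall h : cantor_space -> nat -> nat, exists g, forall z, Z z -> eventually_le (h z) g) :
  forall (Phi : seq cantor_space -> nat -> nat), exists g,
    forall s, allZ Z s -> eventually_le (Phi s) g.
Proof.
move=> Phi.
have /choice [gn Hgn] := fun n => bndn B n Phi.
exists (fun k => \max_(i < k.+1) gn i k) => s Zs.
apply: evle_trans (Hgn (size s) s erefl Zs) _.
exists (size s) => k hk.
exact: (@leq_bigmax _ (fun i : 'I_k.+1 => gn i k) (Ordinal (hk : (size s < k.+1)%N))).
Qed.

Definition Hs (s : seq cantor_space) (i : nat) : bool := foldr (fun z b => z i && b) true s.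

Definition Phi (Z : set cantor_space) : set (set nat) :=
  [set A | exists s m, allZ Z s /\ forall i, (m <= i)%N -> Hs s i -> A i].

Lemma Hs_U (U : set_system nat) (UF : Filter U) (Z : set cantor_space)
  (ZU : forall z, Z z -> U [set n | z n = true]) s :
  allZ Z s -> U [set i | Hs s i].
Proof.
elim: s => [_|z s IH [Zz Zs]] /=; first by apply: filterS filterT.
by apply: filterS (filterI (ZU z Zz) (IH Zs)) => i /= [-> ->].
Qed.

Lemma allZ_cat Z s1 s2 : allZ Z s1 -> allZ Z s2 -> allZ Z (s1 ++ s2).
Proof. by elim: s1 => [//|z s IH] /= [? ?] ?; split => //; apply: IH. Qed.

Lemma Hs_cat s1 s2 i : Hs (s1 ++ s2) i = Hs s1 i && Hs s2 i.
Proof. by elim: s1 => [//|z s IH] /=; rewrite IH andbA. Qed.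

Lemma Hs_ex (U : set_system nat) (UP : ProperFilter U)
  (Ucof : forall m, U [set n | (m <= n)%N]) (Z : set cantor_space)
  (ZU : forall z, Z z -> U [set n | z n = true]) s m :
  allZ Z s -> exists i, (m <= i)%N /\ Hs s i.
Proof.
move=> Zs; have [i [a b]] := filter_ex (filterI (Ucof m) (Hs_U _ ZU Zs)).
by exists i.
Qed.

Lemma Phi_filter (U : set_system nat) (UP : ProperFilter U)
  (Ucof : forall m, U [set n | (m <= n)%N]) (Z : set cantor_space)
  (ZU : forall z, Z z -> U [set n | z n = true]) : is_filter (Phi Z).
Proof.
split.
- by exists [::], 0%N.
- move=> [s [m [Zs h]]]; have [i [a b]] := Hs_ex UP Ucof ZU m Zs.
  exact: h i a b.
- by move=> A B [s [m [Zs h]]] AB; exists s, m; split => // i a b; apply: AB; exact: h.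
- move=> A B [s1 [m1 [Z1 h1]]] [s2 [m2 [Z2 h2]]].
  exists (s1 ++ s2), (maxn m1 m2); split; first exact: allZ_cat.
  move=> i; rewrite geq_max Hs_cat => /andP[a b] /andP[c d]; split; [exact: h1|exact: h2].
Qed.

Lemma Phi_nonprincipal Z : nonprincipal (Phi Z).
Proof.
move=> A /finite_seqP [s sE]; exists [::], (\max_(x <- s) x.+1); split => // i hi _.
apply: contrapT => nA.
have : [set` s] i by rewrite -sE.
move=> /= ins; have := @leq_bigmax_seq _ s xpredT (fun x => x.+1) i ins isT.
by move=> h; have := leq_trans h hi; rewrite ltnn.
Qed.

Lemma Phi_meager (U : set_system nat) (UP : ProperFilter U)
  (Ucof : forall m, U [set n | (m <= n)%N]) (Z : set cantor_space)
  (ZU : forall z, Z z -> U [set n | z n = true])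
  (B : forall h : cantor_space -> nat -> nat, exists g, forall z, Z z -> eventually_le (h z) g) :
  meager (filter_as_subset (Phi Z)).
Proof.
have /choice [f Hf] : forall s, exists fk : nat -> nat,
    allZ Z s -> forall k, (k <= fk k)%N /\ Hs s (fk k).
  move=> s; case: (pselect (allZ Z s)) => Zs; last by exists id.
  have /choice [fk Hfk] : forall k, exists i, (k <= i)%N /\ Hs s i.
    by move=> k; exact: (Hs_ex UP Ucof ZU k Zs).
  by exists fk.
have [g Hg] := bnd_all B f.
pose G' k := (k.+1 + \max_(i < k.+1) g i)%N.
pose fix bs j := if j is j'.+1 then G' (bs j') else 0%N.
have bs_ge : forall j, (j <= bs j)%N.
  by elim=> [//|j IH] /=; rewrite /G' ltnS (leq_trans IH) // leq_addr.
have g_lt : forall j, (g (bs j) < bs j.+1)%N.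
  move=> j; rewrite /= /G' addSn ltnS (leq_trans _ (leq_addl _ _)) //.
  exact: (@leq_bigmax _ (fun i : 'I_(bs j).+1 => g i) (Ordinal (ltnSn (bs j)))).
pose Nj j := [set x : cantor_space | forall k, (j <= k)%N ->
                exists i, [/\ (bs k <= i)%N, (i < bs k.+1)%N & x i = true]].
exists Nj; split.
  move=> j; apply: nd_crit => p m.
  pose ks := maxn j m.
  exists (fun i => if (bs ks <= i)%N && (i < bs ks.+1)%N then false else p i), (bs ks.+1).
  split.
    move=> i im; have : (i < bs ks)%N.
      by apply: leq_trans im (leq_trans (leq_maxr j m) (bs_ge ks)).
    by rewrite ltnNge => /negbTE ->.
  move=> y hy /(_ ks (leq_maxl j m)) [i [a b c]].
  by move: (hy i b); rewrite a b /= c.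
move=> x [s [m [Zs h]]].
have [N0 hN0] := Hg s Zs.
exists (maxn m N0) => // k; rewrite geq_max => /andP[km kN].
have [hk1 hk2] := Hf s Zs (bs k).
exists (f s (bs k)); split => //.
  apply: leq_ltn_trans (hN0 _ (leq_trans kN (bs_ge k))) (g_lt k).
apply: h hk2; apply: leq_trans km (leq_trans (bs_ge k) hk1).
Qed.

Lemma Phi_nonmeas (U : set_system nat) (UP : ProperFilter U)
  (Ucof : forall m, U [set n | (m <= n)%N]) (Z : set cantor_space)
  (ZU : forall z, Z z -> U [set n | z n = true]) :
  ~ Defs.null_set Z -> ~ lebesgue_measurable (filter_as_subset (Phi Z)).
Proof.
move=> nZ; set Pt := filter_as_subset (Phi Z).
have invP : invariant Pt.
  move=> x y [m0 h0] [s [m [Zs h]]]; exists s, (maxn m m0); split => // i.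
  rewrite geq_max => /andP[a b] c; rewrite /= -h0 //; exact: h.
have invC : invariant (~` Pt).
  move=> x y [m0 h0] nx Py; apply: nx; apply: invP Py.
  by exists m0 => i hi; rewrite h0.
have ZP : Z `<=` Pt.
  move=> z Zz; exists [:: z], 0%N; split => // i _ /=; by rewrite andbT.
have FZ : [set y | Z (flip y)] `<=` ~` Pt.
  move=> y Zy [s [m [Zs h]]].
  have hU : U ([set n | (m <= n)%N] `&` [set i | Hs s i] `&` [set n | flip y n = true]).
    apply: filterI; last exact: ZU.
    by apply: filterI; [exact: Ucof|exact: (Hs_U _ ZU Zs)].
  have [i [[a b] c]] := filter_ex hU.
  by move: (h i a b) c; rewrite /flip /= => ->.
have nP : ~ Defs.null_set Pt by move=> nP; apply: nZ; exact: null_sub ZP nP.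
have nC : ~ Defs.null_set (~` Pt).
  move=> nC; apply: nZ; have := null_flip (null_sub FZ nC).
  by apply: null_sub => z Zz /=; rewrite flipK.
have g1 := outer_ge1 (fun c W cc W1 hW => zero_one invP cc W1 hW) nP.
have g2 := outer_ge1 (fun c W cc W1 hW => zero_one invC cc W1 hW) nC.
move=> /(_ setT); rewrite !setTI => E.
have := outer_top; rewrite E => h.
have := leeD g1 g2; move=> /le_trans /(_ h).
by rewrite -EFinD lee_fin; lra.
Qed.



Theorem theorem2p4 :
  unif_lt_b ->
  exists F : set (set nat),
    [/\ is_filter F, nonprincipal F,
        meager (filter_as_subset F) &
        ~ lebesgue_measurable (filter_as_subset F)].
Proof.
move=> [X [Fb [[nX _] [[unbF minF] [XF nFX]]]]].
have [U [UU FU]] := @ultraFilterLemma nat \oo eventually_filter.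
have UP : ProperFilter U := @ultra_proper _ _ UU.
have UF : Filter U := UP.
have Ucof : forall m, U [set n | (m <= n)%N] by move=> m; apply: FU; exists m.
have Ucompl : forall y : cantor_space,
    U [set n | y n = true] -> U [set n | flip y n = true] -> False.
  move=> y h1 h2; have h := @filterI _ U UF _ _ h1 h2.
  apply: (@filter_not_empty _ U UP); apply: (@filterS _ U UF _ _ _ h) => n /= [a]; by rewrite /flip /= a.

pose Z := [set x : cantor_space | U [set n | x n = true] /\ (X x \/ X (flip x))].
have ZU : forall z, Z z -> U [set n | z n = true] by move=> z [].
have ZX : (Z #<= X)%card.
  pose io := fun x : cantor_space => if pselect (X x) then x else flip x.
  have inj : {in Z &, injective io}.
    move=> x y0 /set_mem [Ux Xx] /set_mem [Uy Xy]; rewrite /io.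
    case: pselect => hx; case: pselect => hy.
    - by move=> /=.
    - by move=> /= E; exfalso; apply: (Ucompl y0 Uy); rewrite -E.
    - by move=> /= E; exfalso; apply: (Ucompl x Ux); rewrite E.
    - by move=> /= E; rewrite -(flipK x) E flipK.
  have := inj_card_eq inj; rewrite card_eq_le => /andP[_ h].
  apply: card_le_trans h (subset_card_le _) => _ [x [_ Xx] <-]; rewrite /io.
  by case: pselect => // hx; case: Xx.
have B : forall h : cantor_space -> nat -> nat,
    exists g, forall z, Z z -> eventually_le (h z) g.
  move=> h; apply: contrapT => nb.
  have unb : unbounded_family (h @` Z).
    by move=> [g hg]; apply: nb; exists g => z Zz; apply: hg; exists z.
  apply: nFX; apply: card_le_trans (minF _ unb) _.
  exact: card_le_trans (card_image_le h Z) ZX.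
have nZ : ~ Defs.null_set Z.
  move=> nZ; apply: nX; apply: (null_union _ nZ (null_flip nZ)).
  move=> x Xx; case: (in_ultra_setVsetC [set n | x n = true] UU) => hU.
    by left; split => //; left.
  right => /=; split; last by right; rewrite flipK.
  by apply: (@filterS _ U UF _ _ _ hU) => n /= h; rewrite /flip; case: (x n) h.
exists (Phi Z); split.
- exact: (Phi_filter UP Ucof ZU).
- exact: Phi_nonprincipal.
- exact: (Phi_meager UP Ucof ZU B).
- exact: (Phi_nonmeas UP Ucof ZU nZ).
Qed.
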